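(* Let $K\ge1$ and let $h_1,\dots,h_K>0$. Let $\pi$ be a permutation of $\{1,\dots,K\}$ such that $h_{\pi(j_1)}\le h_{\pi(j_2)}$ for all $j_1\le j_2$. Define $$E_{\mathrm{STAC}}=\sum_{j=1}^K\Big(\frac{2^{j-1}}{h_{\pi(j)}}\Big)^2,\qquad E_{\mathrm{SEP}}=\frac1K\sum_{i=1}^K\sum_{j=1}^K\Big(\frac{2^{j-1}}{h_i}\Big)^2.$$ Then $E_{\mathrm{SEP}}\ge E_{\mathrm{STAC}}$, and equality holds only when $h_1=h_2=\dots=h_K$.
   Context: $h_i$ is the (real, positive) channel gain from node $i$ to the receiver. $E_{\mathrm{STAC}}$ is the total energy when node $\pi(j)$ transmits with weight $2^{j-1}$ (power $(2^{j-1}/h_{\pi(j)})^2$) for unit time; $E_{\mathrm{SEP}}$ is the total energy when each node transmits separately for time $1/K$ with power $\sum_{j}(2^{j-1}/h_i)^2$. *)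

(* Defs.v *)
From mathcomp Require Import all_boot all_order all_algebra all_fingroup.
Set Implicit Arguments. Unset Strict Implicit. Unset Printing Implicit Defensive.
Import Order.TTheory GRing.Theory Num.Theory.
Local Open Scope ring_scope.

(* Indices are 0-based: j : 'I_K stands for the paper's j+1, so the weight
   2^{(j+1)-1} becomes 2^j. *)
Definition E_STAC (R : realFieldType) (K : nat) (h : 'I_K -> R)
  (pi : {perm 'I_K}) : R :=
  \sum_(j < K) ((2%:R ^+ j) / h (pi j)) ^+ 2.

Definition E_SEP (R : realFieldType) (K : nat) (h : 'I_K -> R) : R :=
  K%:R^-1 * \sum_(i < K) \sum_(j < K) ((2%:R ^+ j) / h i) ^+ 2.

(* Main.v *)
Require Import Defs.
From mathcomp Require Import all_boot all_order all_algebra all_fingroup.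
From mathcomp Require Import ring lra.
Import Order.TTheory GRing.Theory Num.Theory.
Local Open Scope ring_scope.
Lemma cheb_id (R : realFieldType) (K : nat) (a c : 'I_K -> R) :
  \sum_j \sum_k (a j - a k) * (c j - c k) =
  2%:R * (K%:R * \sum_j a j * c j - (\sum_j a j) * (\sum_j c j)).
Proof.
have E : forall j k, (a j - a k) * (c j - c k) =
   (a j * c j + a k * c k) - (a j * c k + a k * c j) by move=> j k; ring.
under eq_bigr => j _ do under eq_bigr => k _ do rewrite E.
under eq_bigr => j _ do rewrite sumrB !big_split /=.
rewrite sumrB !big_split /=.
have h1 : \sum_(i < K) \sum_(i0 < K) a i * c i = K%:R * \sum_j a j * c j.
  by rewrite mulr_sumr; apply: eq_bigr => i _; rewrite sumr_const card_ord mulr_natl.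
have h2 : \sum_(i < K) \sum_(i0 < K) a i0 * c i0 = K%:R * \sum_j a j * c j.
  by rewrite sumr_const card_ord mulr_natl.
have h3 : \sum_(i < K) \sum_(i0 < K) a i * c i0 = (\sum_j a j) * (\sum_j c j).
  by rewrite mulr_suml; apply: eq_bigr => i _; rewrite mulr_sumr.
have h4 : \sum_(i < K) \sum_(i0 < K) a i0 * c i = (\sum_j a j) * (\sum_j c j).
  by rewrite exchange_big /= -h3.
rewrite h1 h2 h3 h4. ring.
Qed.

Theorem theorem4 (R : realFieldType) (K : nat) (hK : (1 <= K)%N)
  (h : 'I_K -> R) (hpos : forall i, 0 < h i) (pi : {perm 'I_K})
  (hsort : forall j1 j2 : 'I_K, (j1 <= j2)%N -> h (pi j1) <= h (pi j2)) :
  E_STAC h pi <= E_SEP h /\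
  (E_SEP h = E_STAC h pi -> forall i1 i2 : 'I_K, h i1 = h i2).
Proof.
pose a (j : 'I_K) : R := (2%:R ^+ j) ^+ 2.
pose c (j : 'I_K) : R := (h (pi j))^-1 ^+ 2.
have hS : E_STAC h pi = \sum_j a j * c j.
  by apply: eq_bigr => j _; rewrite exprMn.
have hP : E_SEP h = K%:R^-1 * ((\sum_j a j) * (\sum_j c j)).
  rewrite /E_SEP; congr (_ * _).
  rewrite (reindex_inj (@perm_inj _ pi)) /= mulr_sumr.
  apply: eq_bigr => i _; rewrite mulr_suml; apply: eq_bigr => j _.
  by rewrite exprMn.
have apos : forall j, 0 <= 2%:R ^+ j :> R by move=> j; apply: exprn_ge0.
have amono : forall j k : 'I_K, (j <= k)%N -> a j <= a k.
  move=> j k jk; have := apos j; have := apos k.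
  have : 2%:R ^+ j <= 2%:R ^+ k :> R by rewrite ler_eXn2l // ltr1n.
  rewrite /a; nra.
have astrict : forall j k : 'I_K, (j < k)%N -> a j < a k.
  move=> j k jk; have := apos j; have := apos k.
  have : 2%:R ^+ j < 2%:R ^+ k :> R by rewrite ltr_eXn2l // ltr1n.
  rewrite /a; nra.
have ipos : forall j, 0 < (h (pi j))^-1 by move=> j; rewrite invr_gt0.
have imono : forall j k : 'I_K, (j <= k)%N -> (h (pi k))^-1 <= (h (pi j))^-1.
  by move=> j k jk; rewrite lef_pV2 ?posrE ?hpos // hsort.
have cmono : forall j k : 'I_K, (j <= k)%N -> c k <= c j.
  move=> j k jk; have := imono _ _ jk; have := ipos j; have := ipos k.
  rewrite /c; nra.
have Tle : forall j k, (a j - a k) * (c j - c k) <= 0.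
  move=> j k; case: (leqP j k) => jk.
    have := amono _ _ jk; have := cmono _ _ jk; nra.
  have jk' := ltnW jk.
  have := amono _ _ jk'; have := cmono _ _ jk'; nra.
have hsum : \sum_j \sum_k (a j - a k) * (c j - c k) <= 0.
  apply: sumr_le0 => j _; apply: sumr_le0 => k _; exact: Tle.
rewrite cheb_id in hsum.
have kpos : 0 < K%:R :> R by rewrite ltr0n.
have kk : K%:R * K%:R^-1 = 1 :> R by rewrite mulfV // gt_eqF.
have kipos : 0 < K%:R^-1 :> R by rewrite invr_gt0.
rewrite hS hP; split.
  set S := \sum_j a j * c j in hsum *.
  set P := (\sum_j a j) * (\sum_j c j) in hsum *.
  have h1 : K%:R * S <= P by lra.
  have -> : S = K%:R^-1 * (K%:R * S) by rewrite mulrA mulVf ?mul1r // gt_eqF.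
  by rewrite ler_wpM2l // ltW.
move=> heq.
have hsum0 : \sum_j \sum_k - ((a j - a k) * (c j - c k)) = 0.
  rewrite (eq_bigr (fun j => - \sum_k (a j - a k) * (c j - c k))); last first.
    by move=> j _; rewrite sumrN.
  rewrite sumrN cheb_id.
  set S := \sum_j a j * c j in heq *.
  set P := (\sum_j a j) * (\sum_j c j) in heq *.
  have : P = K%:R * S by rewrite -heq mulrA kk mul1r.
  move=> ->; ring.
have T0 : forall j k, (a j - a k) * (c j - c k) = 0.
  move=> j k.
  have H1 : \sum_k - ((a j - a k) * (c j - c k)) = 0.
    apply: (psumr_eq0P _ hsum0) => //.
    move=> i _; apply: sumr_ge0 => l _; rewrite oppr_ge0; exact: Tle.
  have H2 : - ((a j - a k) * (c j - c k)) = 0.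
    apply: (psumr_eq0P _ H1) => // l _; rewrite oppr_ge0; exact: Tle.
  by apply/eqP; rewrite -oppr_eq0 H2.
have key : forall j k : 'I_K, (j < k)%N -> h (pi j) = h (pi k).
  move=> j k jk.
  have := T0 j k; move/eqP; rewrite mulf_eq0 => /orP [].
    by rewrite subr_eq0 => /eqP e; have := astrict _ _ jk; rewrite e ltxx.
  rewrite subr_eq0 /c => /eqP e.
  have := ipos j; have := ipos k => p1 p2.
  have : (h (pi j))^-1 = (h (pi k))^-1.
    apply/eqP; rewrite eq_le; apply/andP; split; nra.
  exact: invr_inj.
move=> i1 i2.
rewrite -(permKV pi i1) -(permKV pi i2).
set j := (pi^-1)%g i1; set k := (pi^-1)%g i2.
case: (ltngtP j k) => jk.
- exact: key.
- by rewrite (key _ _ jk).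
- by have -> : j = k by apply: val_inj.
Qed.
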